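(* Let $b,n\ge1$ and $1\le c\le b$ be integers and let $p_1,\dots,p_b\ge 0$ satisfy $p_1=p_2=\dots=p_c>p_{c+1}\ge p_{c+2}\ge\dots\ge p_b$. Then for every integer $\tilde c$ with $1\le\tilde c\le c$ and every integer $k$ with $0\le k\le n(b-1)$, $$\frac{\Pr(\mathrm{DBS}(\tilde c))}{\tilde c^{\,n}}\ \ge\ \frac{\Pr(\mathrm{LDS}_{\le k})}{|\mathrm{LDS}_{\le k}|}.$$
   Context: Search-tree model: a complete $b$-ary tree of depth $n$ whose leaves are identified with sequences $(j_1,\dots,j_n)\in\{1,\dots,b\}^n$. Given reals $p_1,\dots,p_b\ge0$, the success probability of a leaf is $\prod_{i=1}^n p_{j_i}$, and for a set $S$ of leaves, $\Pr(S)=\sum_{(j_1,\dots,j_n)\in S}\prod_{i=1}^n p_{j_i}$; $|S|$ is the number of leaves in $S$. For $1\le c\le b$, $\mathrm{DBS}(c)=\{1,\dots,c\}^n$ (so $|\mathrm{DBS}(c)|=c^n$ and $\Pr(\mathrm{DBS}(c))=(\sum_{i=1}^c p_i)^n$). The discrepancy of a leaf $(j_1,\dots,j_n)$ is $\sum_{i=1}^n (j_i-1)$, and $\mathrm{LDS}_{\le k}$ is the set of leaves of discrepancy at most $k$. *)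

(* Defs.v *)
From mathcomp Require Import all_boot all_order all_algebra.
Set Implicit Arguments. Unset Strict Implicit. Unset Printing Implicit Defensive.
Import Order.TTheory GRing.Theory Num.Theory.
Local Open Scope ring_scope.

(* Leaves of the complete b-ary tree of depth n: sequences (j_1..j_n),
   encoded 0-based: leaf s : {ffun 'I_n -> 'I_b}, with j_i = s i + 1.
   Branch probabilities p : 'I_b -> R, with p (j-1) = p_j. *)

Definition leaf_prob (R : numDomainType) (n b : nat) (p : 'I_b -> R)
  (s : {ffun 'I_n -> 'I_b}) : R := \prod_(i < n) p (s i).

Definition Pr (R : numDomainType) (n b : nat) (p : 'I_b -> R)
  (S : {set {ffun 'I_n -> 'I_b}}) : R := \sum_(s in S) leaf_prob p s.

(* DBS(c) = {1..c}^n, i.e. all 0-based entries < c *)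
Definition DBS (n b c : nat) : {set {ffun 'I_n -> 'I_b}} :=
  [set s : {ffun 'I_n -> 'I_b} | [forall i, (s i < c)%N]].

(* discrepancy = sum_i (j_i - 1) = sum of 0-based entries *)
Definition discrepancy (n b : nat) (s : {ffun 'I_n -> 'I_b}) : nat :=
  (\sum_(i < n) (s i : nat))%N.

Definition LDS_le (n b k : nat) : {set {ffun 'I_n -> 'I_b}} :=
  [set s : {ffun 'I_n -> 'I_b} | (discrepancy s <= k)%N].

(* Main.v *)
Require Import Defs.
From mathcomp Require Import all_boot all_order all_algebra.
Import Order.TTheory GRing.Theory Num.Theory.
Local Open Scope ring_scope.

Lemma card_lt (b ct : nat) : (ct <= b)%N -> #|[pred j : 'I_b | (j < ct)%N]| = ct.
Proof.
move=> hct.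
rewrite (@eq_card _ _ [set widen_ord hct i | i : 'I_ct]); last first.
  move=> j; rewrite [RHS]inE /=; apply/idP/imsetP => [hj|[i _ ->]] /=.
    by exists (Ordinal hj) => //; apply: val_inj.
  by rewrite inE /= ltn_ord.
rewrite card_imset ?card_ord //.
by move=> x y /(congr1 val) /= h; apply: val_inj.
Qed.

Theorem theorem2 (R : realFieldType) (b n c : nat) (p : 'I_b -> R)
  (hb : (1 <= b)%N) (hn : (1 <= n)%N) (hc1 : (1 <= c)%N) (hcb : (c <= b)%N)
  (hp0 : forall i, 0 <= p i)
  (heq : forall i j : 'I_b, (i < c)%N -> (j < c)%N -> p i = p j)
  (hgt : forall i j : 'I_b, (i : nat) = c.-1 -> (j : nat) = c -> p j < p i)
  (hdec : forall i j : 'I_b, (c <= i)%N -> (i <= j)%N -> p j <= p i) :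
  forall (ct k : nat), (1 <= ct)%N -> (ct <= c)%N -> (k <= n * (b - 1))%N ->
    Pr p (LDS_le n b k) / (#|LDS_le n b k|)%:R
      <= Pr p (DBS n b ct) / (ct ^ n)%:R.
Proof.
move=> ct k hct1 hctc _.
have hc1b : (c.-1 < b)%N by rewrite prednK.
set q := p (Ordinal hc1b).
have hqc : (Ordinal hc1b < c)%N by rewrite /= prednK.
have hle : forall i, p i <= q.
  move=> i; case: (ltnP i c) => hi.
    by rewrite /q (heq i (Ordinal hc1b)).
  have hcb' : (c < b)%N by exact: leq_ltn_trans hi (ltn_ord i).
  apply: le_trans (hdec (Ordinal hcb') i (leqnn c) hi) _.
  exact/ltW/hgt.
have hq0 : 0 <= q by exact: hp0.
have hlp : forall s : {ffun 'I_n -> 'I_b}, leaf_prob p s <= q ^+ n.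
  move=> s; rewrite /leaf_prob -[n in q ^+ n]card_ord -prodr_const.
  by apply: ler_prod => i _; rewrite hp0 hle.
have hD : Pr p (DBS n b ct) = (ct ^ n)%:R * q ^+ n.
  rewrite /Pr (eq_bigr (fun _ => q ^+ n)); last first.
    move=> s; rewrite inE => /forallP hs.
    rewrite /leaf_prob -[n in q ^+ n]card_ord -prodr_const.
    apply: eq_bigr => i _; apply: heq => //.
    exact: leq_trans (hs i) hctc.
  rewrite sumr_const mulr_natl; congr (_ *+ _).
  have -> : DBS n b ct = [set s | s \in ffun_on [pred j : 'I_b | (j < ct)%N]].
    by apply/setP => s; rewrite !inE.
  by rewrite cardsE card_ffun_on card_lt ?card_ord // (leq_trans hctc).
rewrite hD [X in _ <= X]mulrAC divff ?mul1r; last first.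
  by rewrite pnatr_eq0 -lt0n expn_gt0 hct1.
have hL : Pr p (LDS_le n b k) <= (#|LDS_le n b k|)%:R * q ^+ n.
  rewrite /Pr; apply: le_trans (ler_sum _ (fun s _ => hlp s)) _; by rewrite sumr_const mulr_natl.
case: (posnP #|LDS_le n b k|) => [->|hpos].
  by rewrite invr0 mulr0 exprn_ge0.
rewrite ler_pdivrMr ?ltr0n // mulrC; exact: hL.
Qed.
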